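(* With the Fock space $\widetilde{\mathcal H}$, operators $M_k,A_k,D_k$ and vectors $\eta_k$ as in the context, let $R$ be a positive integer and $\varepsilon\colon\{1,\dots,R\}\to\{1,*\}$, $\iota\colon\{1,\dots,R\}\to\{1,\dots,N\}$. Suppose $\psi\colon\{1,\dots,R\}\to\mathcal L(\widetilde{\mathcal H})$ satisfies: (a) $\psi(1)\in\{M_{\iota(1)},A^*_{\iota(1)}\}$ if $\varepsilon(1)=1$, and $\psi(1)\in\{M^*_{\iota(1)},D^*_{\iota(1)}\}$ if $\varepsilon(1)=*$; (b) $\psi(R)\in\{M_{\iota(R)},D_{\iota(R)}\}$ if $\varepsilon(R)=1$, and $\psi(R)\in\{M^*_{\iota(R)},A_{\iota(R)}\}$ if $\varepsilon(R)=*$; (c) for $2\le j\le R-1$, $\psi(j)\in\{M_{\iota(j)}^{\varepsilon(j)},(A^*_{\iota(j)})^{\varepsilon(j)},D_{\iota(j)}^{\varepsilon(j)}\}$. Let $k,k'\in\{1,\dots,N\}$. Then $\langle\psi(1)\psi(2)\cdots\psi(R)\eta_k,\eta_{k'}\rangle=0$ unless $k=k'=\iota(1)=\iota(R)$ and there exists $\pi\in NC(R)$ such that (i) $\pi\in NC_{\mathrm{irr}}(R)$, (ii) for every block $(q_1<\dots<q_r)$ of $\pi$, $\iota(q_1)=\dots=\iota(q_r)$ and $\varepsilon(q_1)\ne\varepsilon(q_2)\ne\dots\ne\varepsilon(q_r)\ne\varepsilon(q_1)$, and $\psi=\varphi_\pi$, where $\varphi_\pi$ is defined by: $\varphi_\pi(j)=M_{\iota(j)}^{\varepsilon(j)}$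 for $j\in\{1,R\}$; for $2\le j\le R-1$ with $\varepsilon(j)=1$, $\varphi_\pi(j)$ is $D_{\iota(j)}$, $A^*_{\iota(j)}$ or $M_{\iota(j)}$ according as $j$ is the least element of its block, the greatest element of its block, or neither; for $2\le j\le R-1$ with $\varepsilon(j)=*$, $\varphi_\pi(j)$ is $A_{\iota(j)}$, $D^*_{\iota(j)}$ or $M^*_{\iota(j)}$ in the same three cases.
   Context: $\sigma_1,\dots,\sigma_N$ are compactly supported symmetric finite positive Borel measures on $\mathbf{R}$. $NC(R)$ is the set of noncrossing partitions of $\{1,\dots,R\}$ and $NC_{\mathrm{irr}}(R)$ those in which $1$ and $R$ lie in the same block. Fock model: let $\{e,f\}$ be an orthonormal basis of $\mathbf{C}^2$, $H_k^e=L^2(\sigma_k)\otimes\mathbf{C}e$, $H_k^f=L^2(\sigma_k)\otimes\mathbf{C}f$, $\mathcal H=\bigoplus_{k=1}^N(H_k^e\oplus H_k^f)$, $\widetilde{\mathcal H}=\bigoplus_{n\ge1}\mathcal H^{\otimes n}$ (no vacuum), with inner product $\langle\cdot,\cdot\rangle$. Let $\mathrm{id}_k\in L^2(\sigma_k)$ be $t\mapsto t$ and $1_k$ the constant $1$; $m_k\colon H_k^e\to H_k^f$, $m_k(F\otimes e)=(\mathrm{id}_k F)\otimes f$. For $v_1,\dots,v_n\in\mathcal H$: $M_k(v_1\otimes\cdots\otimes v_n)=m_k(P_{H_k^e}v_1)\otimes v_2\otimes\cdots\otimes v_n$ (so $M_k^*(v_1\otimes\cdots\otimes v_n)=m_k^*(P_{H_k^f}v_1)\otimes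 v_2\otimes\cdots\otimes v_n$), $A_k^*(v_1\otimes\cdots\otimes v_n)=(\mathrm{id}_k\otimes f)\otimes v_1\otimes\cdots\otimes v_n$, $D_k^*(v_1\otimes\cdots\otimes v_n)=(\mathrm{id}_k\otimes e)\otimes v_1\otimes\cdots\otimes v_n$; adjoints $A_k(v_1\otimes\cdots\otimes v_n)=\langle v_1,\mathrm{id}_k\otimes f\rangle v_2\otimes\cdots\otimes v_n$, $D_k(v_1\otimes\cdots\otimes v_n)=\langle v_1,\mathrm{id}_k\otimes e\rangle v_2\otimes\cdots\otimes v_n$ for $n\ge2$, and $A_kv=D_kv=0$ for $v\in\mathcal H$. $P_H$ is orthogonal projection onto $H$. For an operator $Z$, $Z^1=Z$ and $Z^*$ is its adjoint (so $(A_k^* )^*=A_k$). $\eta_k=1_k\otimes e+1_k\otimes f$. *)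

(* Defs.v *)
From mathcomp Require Import all_boot all_algebra all_classical all_reals all_analysis.
Set Implicit Arguments. Unset Strict Implicit. Unset Printing Implicit Defensive.
Import GRing.Theory Num.Theory.
Local Open Scope classical_set_scope.
Local Open Scope ring_scope.

(** Operator symbols.  For an index k : 'I_N,
    (KM,k) = M_k, (KMs,k) = M_k-star, (KAs,k) = A_k-star, (KA,k) = A_k,
    (KDs,k) = D_k-star, (KD,k) = D_k. *)
Inductive opkind := KM | KMs | KAs | KA | KDs | KD.

(** Exponent epsilon : bool, with [false] meaning "1" and [true] meaning "*".
    [pw Z s] is Z to the power s (e.g. pw KAs true = KA). *)
Definition pw (K : opkind) (s : bool) : opkind :=
  if s then match K with
            | KM => KMs | KMs => KM | KAs => KA | KA => KAs | KDs => KD | KD => KDs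
            end
  else K.

(** Algebraic Fock model (no vacuum).
    A factor (k, F, c) is the vector F (x) e  in H_k^e  if c = false,
    and F (x) f in H_k^f if c = true, with F a (real) function viewed in L^2(sigma_k).
    A tensor is an elementary tensor v_1 (x) ... (x) v_n of factors;
    a vector is a finite formal linear combination of elementary tensors. *)
Section Fock.
Variables (R : realType) (N : nat).
Variable sigma : 'I_N -> {finite_measure set R -> \bar R}.

Definition factor := ('I_N * (R -> R) * bool)%type.
Definition tensor := seq factor.
Definition vec := seq (R * tensor).

Definition ipf (a b : factor) : R :=
  if (a.1.1 == b.1.1) && (a.2 == b.2)
  then fine (\int[sigma a.1.1]_x ((a.1.2 x * b.1.2 x)%:E))
  else 0.

Definition ipt (s t : tensor) : R :=
  if size s == size t then \prod_(p <- zip s t) ipf p.1 p.2 else 0.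

Definition ipv (u v : vec) : R :=
  \sum_(a <- u) \sum_(b <- v) (a.1 * b.1 * ipt a.2 b.2).

Definition idf : R -> R := fun x => x.
Definition onef : R -> R := fun _ => 1.

Definition app_t (o : opkind * 'I_N) (t : tensor) : vec :=
  let k := o.2 in
  match o.1, t with
  | KM, (l, F, c) :: r =>
      (* M_k (v1 (x) r) = m_k (P_{H_k^e} v1) (x) r *)
      if (l == k) && ~~ c then [:: (1, (k, fun x => x * F x, true) :: r)] else [::]
  | KMs, (l, F, c) :: r =>
      (* M_k^* (v1 (x) r) = m_k^* (P_{H_k^f} v1) (x) r, m_k^*(F (x) f) = (id F) (x) e *)
      if (l == k) && c then [:: (1, (k, fun x => x * F x, false) :: r)] else [::]
  | KAs, _ => [:: (1, (k, idf, true) :: t)]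
  | KDs, _ => [:: (1, (k, idf, false) :: t)]
  | KA, v1 :: ((_ :: _) as r) => [:: (ipf v1 (k, idf, true), r)]
  | KD, v1 :: ((_ :: _) as r) => [:: (ipf v1 (k, idf, false), r)]
  | _, _ => [::]
  end.

Definition app_v (o : opkind * 'I_N) (v : vec) : vec :=
  flatten [seq [seq (a.1 * b.1, b.2) | b <- app_t o a.2] | a <- v].

Definition apply_ops (os : seq (opkind * 'I_N)) (v : vec) : vec :=
  foldr app_v v os.

Definition eta (k : 'I_N) : vec :=
  [:: (1, [:: (k, onef, false)]); (1, [:: (k, onef, true)])].

End Fock.

(** Noncrossing partitions of {1..R}, represented on 'I_R (0-based). *)
Definition noncrossing (R : nat) (P : {set {set 'I_R}}) : Prop :=
  forall B B' : {set 'I_R}, B \in P -> B' \in P -> B != B' ->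
  forall a b c d : 'I_R, (a < b)%N -> (b < c)%N -> (c < d)%N ->
    a \in B -> c \in B -> b \in B' -> d \in B' -> False.

Definition is_NC (R : nat) (P : {set {set 'I_R}}) : Prop :=
  finset.partition P [set: 'I_R] /\ noncrossing P.

Definition is_NC_irr (R : nat) (P : {set {set 'I_R}}) : Prop :=
  is_NC P /\
  forall i j : 'I_R, nat_of_ord i = 0%N -> nat_of_ord j = R.-1 ->
    exists2 B, B \in P & (i \in B) && (j \in B).

Definition block_ok (R N : nat) (iota : 'I_R -> 'I_N) (eps : 'I_R -> bool)
    (B : {set 'I_R}) : Prop :=
  [/\ (forall i j, i \in B -> j \in B -> iota i = iota j),
      (forall i j, i \in B -> j \in B -> (i < j)%N ->
          (forall l, l \in B -> ~ ((i < l)%N /\ (l < j)%N)) -> eps i <> eps j)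
    & (forall i j, i \in B -> j \in B ->
          (forall l, l \in B -> (i <= l)%N) -> (forall l, l \in B -> (l <= j)%N) ->
          eps i <> eps j)].

Definition phi_pi (R N : nat) (P : {set {set 'I_R}}) (iota : 'I_R -> 'I_N)
    (eps : 'I_R -> bool) (j : 'I_R) : opkind * 'I_N :=
  let least := [forall i in finset.pblock P j, (j <= i)%N] in
  let greatest := [forall i in finset.pblock P j, (i <= j)%N] in
  let K :=
    if (nat_of_ord j == 0%N) || (nat_of_ord j == R.-1) then pw KM (eps j)
    else if ~~ eps j then
      (if least then KD else if greatest then KAs else KM)
    else
      (if least then KA else if greatest then KDs else KMs) in
  (K, iota j).

(* Main.v *)
Require Import Defs.
From mathcomp Require Import all_boot all_algebra all_classical all_reals all_analysis.
From mathcomp Require Import measurable_realfun.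
From mathcomp Require Import zify.
Set Implicit Arguments. Unset Strict Implicit. Unset Printing Implicit Defensive.
Import GRing.Theory Num.Theory.
Local Open Scope classical_set_scope.
Local Open Scope ring_scope.

Section RealLemmas.
Variables (R : realType) (N : nat) (sigma : 'I_N -> {finite_measure set R -> \bar R}).

Lemma app_v_cat o (u w : vec R N) :
  app_v sigma o (u ++ w) = app_v sigma o u ++ app_v sigma o w.
Proof. by rewrite /app_v map_cat flatten_cat. Qed.

Lemma apply_ops_cat os (u w : vec R N) :
  apply_ops sigma os (u ++ w) = apply_ops sigma os u ++ apply_ops sigma os w.
Proof. by elim: os => //= o os IH; rewrite IH app_v_cat. Qed.

Lemma ipv_cat (u w v : vec R N) : ipv sigma (u ++ w) v = ipv sigma u v + ipv sigma w v.
Proof. by rewrite /ipv big_cat. Qed.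

Lemma app_v1 o a (t : tensor R N) :
  app_v sigma o [:: (a, t)] = [seq (a * b.1, b.2) | b <- app_t sigma o t].
Proof. by rewrite /app_v /= cats0. Qed.

Lemma app_v0 o : app_v sigma o [::] = [::].
Proof. by []. Qed.

Lemma size_app_t o (t : tensor R N) : (size (app_t sigma o t) <= 1)%N.
Proof.
case: o => K i; case: K; case: t => [|[[l F] c] [|w r]] //=.
all: try by case: ifP.
all: by rewrite /app_t /=; case: ifP.
Qed.

Lemma size_app_v o (v : vec R N) : (size v <= 1)%N -> (size (app_v sigma o v) <= 1)%N.
Proof. case: v => [|x [|y r]] // _; case: x => a t; by rewrite app_v1 size_map size_app_t. Qed.

Lemma app_tM e i (t : tensor R N) :
  app_t sigma (pw KM e, i) t =
  if t is (l, F, c) :: r then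
    (if (l == i) && (c == e) then [:: (1, (i, fun x => x * F x, ~~ e) :: r)] else [::])
  else [::].
Proof.
case: e; case: t => [|[[l F] c] r] //=; rewrite /app_t /=.
all: by case: c; rewrite /= ?andbT ?andbF.
Qed.

Lemma app_tC e i (t : tensor R N) :
  app_t sigma (if e then KDs else KAs, i) t = [:: (1, (i, @idf R, ~~ e) :: t)].
Proof. by case: e; case: t. Qed.

Lemma app_tA e i (t : tensor R N) :
  app_t sigma (if e then KA else KD, i) t =
  if t is v1 :: ((_ :: _) as r) then [:: (ipf sigma v1 (i, @idf R, e), r)] else [::].
Proof. by case: e; case: t => [|v1 [|w r]]. Qed.

End RealLemmas.

Lemma odd_moment (R : realType) (mu : {finite_measure set R -> \bar R})
  (Hsym : forall A : set R, measurable A -> mu ((fun x : R => - x) @` A) = mu A)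
  m : odd m -> fine (\int[mu]_x ((x ^+ m)%:E)) = 0.
Proof.
move=> om.
set f : R -> \bar R := fun x : R => (x ^+ m)%:E.
pose neg := fun x : R => (- x)%R.
have mf : measurable_fun [set: R] f.
  by apply/measurable_EFinP; exact: exprn_measurable.
have fN : forall x : R, (f^\- x = f^\+ (neg x))%E.
  move=> x; rewrite funenegE funeposE /f /neg.
  have -> : (- x) ^+ m = - x ^+ m by rewrite exprNn -signr_odd om expr1 mulN1r.
  by rewrite EFinN.
have mneg : measurable_fun [set: R] neg by exact: oppr_measurable.
have e1 : (\int[mu]_x f^\- x = \int[mu]_x f^\+ x)%E.
  transitivity (\int[mu]_(x in neg @^-1` setT) ((f^\+ \o neg) x))%E.
    by rewrite preimage_setT; apply: eq_integral => x _; rewrite fN.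
  have mfp : measurable_fun [set: R] f^\+%E by exact: measurable_funepos.
  have f0 : {in [set: R], forall y, (0 <= f^\+ y)%E} by move=> y _; exact: funepos_ge0.
  rewrite -(ge0_integral_pushforward mneg _ measurableT mfp f0).
  apply: eq_measure_integral => A mA _.
  change (mu (neg @^-1` A) = mu A); rewrite -(Hsym A mA); congr (mu _).
  apply/seteqP; split => x /=.
  - by move=> Ax; exists (- x)%R => //; rewrite /neg opprK.
  - by case=> y Ay <-; rewrite /neg opprK.
rewrite integralE e1.
case: (\int[mu]_x f^\+ x)%E => [r| |] //=.
by rewrite subrr.
Qed.


Definition gh := (nat * nat * bool)%type.
Definition gstep (N : nat) (o : opkind * 'I_N) (j : nat) (g : seq gh) : seq gh :=
  match o.1 with
  | KM | KMs => if g is (x, d, c) :: r then (x, d.+1, ~~ c) :: r else [::]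
  | KAs => (j, 1%N, true) :: g
  | KDs => (j, 1%N, false) :: g
  | KA | KD => behead g
  end.
Definition ids (g : seq gh) := [seq e.1.1 | e <- g].
Fixpoint look (y : nat) (g : seq gh) : option bool :=
  if g is e :: r then (if e.1.1 == y then Some e.2 else look y r) else None.
Definition iscr (K : opkind) := match K with KAs | KDs => true | _ => false end.

Lemma gstepM N e (i : 'I_N) j x d c r :
  gstep (pw KM e, i) j ((x, d, c) :: r) = (x, d.+1, ~~ c) :: r.
Proof. by case: e. Qed.
Lemma gstepC N e (i : 'I_N) j g :
  gstep (if e then KDs else KAs, i) j g = (j, 1%N, ~~ e) :: g.
Proof. by case: e. Qed.
Lemma gstepA N e (i : 'I_N) j g :
  gstep (if e then KA else KD, i) j g = behead g.
Proof. by case: e. Qed.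

Section Run.
Variables (R : realType) (N : nat) (sigma : 'I_N -> {finite_measure set R -> \bar R}).
Hypothesis Hsym : forall (k : 'I_N) (A : set R), measurable A ->
            sigma k ((fun x : R => - x) @` A) = sigma k A.
Variables (n : nat) (ps : nat -> opkind * 'I_N) (ep : nat -> bool) (io : nat -> 'I_N)
  (k k' : 'I_N) (c0 : bool).
Hypothesis Hk : forall j, (j <= n)%N ->
  [\/ ps j = (pw KM (ep j), io j), ps j = (if ep j then KDs else KAs, io j)
    | ps j = (if ep j then KA else KD, io j)].
Hypothesis Hn : ~~ iscr (ps n).1.
Hypothesis H0 : ps 0%N <> (if ep 0%N then KA else KD, io 0%N).

Definition v0 : vec R N := [:: (1, [:: (k, @onef R, c0)])].
Definition S j := foldr (fun i v => app_v sigma (ps i) v) v0 (iota j (n.+1 - j)).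
Definition G j := foldr (fun i g => gstep (ps i) i g) [:: (n, 0%N, c0)] (iota j (n.+1 - j)).
Hypothesis Hnz : ipv sigma (S 0) (eta R k') != 0.

Lemma S_step j : (j <= n)%N -> S j = app_v sigma (ps j) (S j.+1).
Proof. by move=> jn; rewrite /S subSn //= subSS. Qed.
Lemma G_step j : (j <= n)%N -> G j = gstep (ps j) j (G j.+1).
Proof. by move=> jn; rewrite /G subSn //= subSS. Qed.
Lemma S_end : S n.+1 = v0.
Proof. by rewrite /S subnn. Qed.
Lemma G_end : G n.+1 = [:: (n, 0%N, c0)].
Proof. by rewrite /G subnn. Qed.

Lemma size_S j : (size (S j) <= 1)%N.
Proof.
rewrite /S; elim: (iota _ _) => [|i l IH] //; exact: size_app_v.
Qed.

Definition A j := (head (0, [::]) (S j)).1.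
Definition T j := (head (0, [::]) (S j)).2.

Lemma nz j : (j <= n.+1)%N -> S j = [:: (A j, T j)] /\ A j != 0.
Proof.
elim: j => [|j IH] jn.
  have := size_S 0; move: Hnz; rewrite /A /T; case: (S 0) => [|[a t] [|? ?]] //=.
    by rewrite /ipv big_nil eqxx.
  move=> H _; split => //; apply: contraNneq H => ->.
  by rewrite /ipv big_seq1 big1 // => b _; rewrite !mul0r.
have [Ej aj] := IH (ltnW jn).
rewrite S_step // in Ej.
have := size_S j.+1; rewrite /A /T.
case E: (S j.+1) => [|[a' t'] [|? ?]] // _; rewrite E in Ej; first by [].
split => //=; apply: contraNneq aj => a0.
move: Ej; rewrite app_v1 a0; case: (app_t _ _ _) => [|[s t] ?] //= [<- _].
by rewrite mul0r.
Qed.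

Lemma step j : (j <= n)%N -> exists s, app_t sigma (ps j) (T j.+1) = [:: (s, T j)] /\ s != 0.
Proof.
move=> jn; have [Ej aj] := nz (leqW jn); have [Ej1 aj1] := nz (jn : (j.+1 <= n.+1)%N).
move: Ej; rewrite S_step // Ej1 app_v1.
have := size_app_t sigma (ps j) (T j.+1).
case: (app_t _ _ _) => [|[s t] [|? ?]] //= _ [Ea Et].
exists s; rewrite Et; split => //; apply: contraNneq aj => s0.
by rewrite -Ea s0 mulr0.
Qed.

Definition iot x := if x == n then k else io x.
Definition bs x := if x == n then ~~ c0 else ~~ ep x.

Fixpoint relP (t : tensor R N) (g : seq gh) : Prop :=
  match t, g with
  | [::], [::] => True
  | (l, F, c) :: t', (x, d, c') :: g' =>
      [/\ l = iot x, c = c', (forall y, F y = y ^+ d) & relP t' g']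
  | _, _ => False
  end.

Fixpoint gshape j (g : seq gh) : bool :=
  match g with
  | [::] => false
  | [:: e] => e.1.1 == n
  | e :: r => [&& (j <= e.1.1 < n)%N, iscr (ps e.1.1).1,
                  all (fun f => (e.1.1 < f.1.1)%N) r & gshape j r]
  end.

Definition colok (g : seq gh) := all (fun e => e.2 == bs e.1.1 (+) ~~ odd e.1.2) g.

Definition INV j := [/\ relP (T j) (G j), gshape j (G j) & colok (G j)].

Definition SC j : Prop :=
  [\/ ps j = (pw KM (ep j), io j) /\ exists x d c g2,
         [/\ G j.+1 = (x, d, c) :: g2, G j = (x, d.+1, ~~ c) :: g2, c = ep j & io j = iot x],
      [/\ ps j = (if ep j then KDs else KAs, io j), G j = (j, 1%N, ~~ ep j) :: G j.+1
         & (j < n)%N]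
    | ps j = (if ep j then KA else KD, io j) /\ exists x d c y g2,
         [/\ G j.+1 = (x, d, c) :: y :: g2, G j = y :: g2, c = ep j, io j = iot x & odd d]].

Lemma gshape_mono i j g : (i <= j)%N -> gshape j g -> gshape i g.
Proof.
move=> ij; elim: g => [|e r IH] //=; case: r IH => [|f r] //= IH.
case/and4P=> /andP[je en] -> -> /IH ->; rewrite en andbT !andbT /=.
by rewrite (leq_trans ij je).
Qed.

Lemma gshape_ids j g : gshape j g -> all (fun e => (j <= e.1.1)%N || (e.1.1 == n)) g.
Proof.
elim: g => [|e r IH] //=; case: r IH => [|f r] IH /=; first by move=> ->; rewrite orbT.
by case/and4P=> /andP[-> _] _ _ /IH.
Qed.

Lemma gshape_nil j g : gshape j g -> g <> [::].
Proof. by case: g. Qed.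

Lemma gshape_top j x d c d' c' g :
  gshape j ((x, d, c) :: g) = gshape j ((x, d', c') :: g).
Proof. by case: g. Qed.

Lemma INV_base : INV n.+1.
Proof.
rewrite /INV /T S_end G_end /=; split => //.
- by split => //; rewrite /iot eqxx.
- by rewrite /colok /= /bs eqxx andbT; case: c0.
Qed.

Lemma INV_step j : (j <= n)%N -> INV j.+1 -> INV j /\ SC j.
Proof.
move=> jn [rel gk ck]; have [s [Hs s0]] := step jn.
have Gj := G_step jn.
case: (Hk jn) => Hp; rewrite Hp in Hs Gj.
- rewrite app_tM in Hs.
  move: rel gk ck Hs Gj; case: (T j.+1) => [|[[l F] c] r];
    case EG: (G j.+1) => [|[[x d] c'] g2] //=.
  move=> [lx cc Fd rr] gk ck; case: ifP => // /andP[/eqP li /eqP ce] [_ ET] Gj.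
  rewrite gstepM in Gj.
  split; last first.
    by apply: Or31; split => //; exists x, d, c', g2; split => //; rewrite -?cc -?ce -?li.
  rewrite /INV -ET Gj; split.
  + rewrite /=; split; [by rewrite -li | by rewrite -cc ce | | by []].
    by move=> y; rewrite Fd exprS.
  + by apply: (@gshape_mono j j.+1) => //; rewrite (gshape_top _ _ _ _ d c').
  + move: ck; rewrite /colok /= => /andP[/eqP -> ->]; rewrite andbT negbK.
    by case: (bs x); case: (odd d).
- rewrite app_tC in Hs; case: Hs => _ ET; rewrite gstepC in Gj.
  have jn' : (j < n)%N.
    rewrite ltn_neqAle jn andbT; apply/eqP => jE; move: Hn; rewrite -jE Hp.
    by case: (ep j).
  have jn'' : (j == n) = false by apply/negbTE; rewrite neq_ltn jn'.
  split; last by apply: Or32; split.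
  rewrite /INV -ET Gj; split.
  + by rewrite /=; split => //; rewrite /iot jn''.
  + move: gk; case EG: (G j.+1) => [|f g] // gk.
    have gk' := gshape_mono (leqnSn j) gk.
    have ga := gshape_ids gk.
    apply/and4P; split.
    * by rewrite leqnn jn'.
    * by rewrite Hp; case: (ep j).
    * change (all (fun e : gh => (j < e.1.1)%N) (f :: g)).
      move: ga; apply: sub_all => e /orP[//|/eqP ->]; exact: jn'.
    * exact: gk'.
  + by rewrite /colok /= /bs jn'' addbF eqxx.
- rewrite app_tA in Hs.
  move: rel gk ck Hs Gj; case: (T j.+1) => [|[[l F] c] [|w r]];
    case EG: (G j.+1) => [|[[x d] c'] [|y g2]] //=.
  all: move=> [lx cc Fd rr]; try by case: w rr => [[? ?] ?].
  move=> gk ck [Es ET] Gj; rewrite gstepA /= in Gj.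
  move: s0; rewrite -Es /ipf /=; case: ifP => [/andP[/eqP li /eqP ce]|]; last by rewrite eqxx.
  move=> s0.
  have od : odd d.
    apply: contraNT s0 => od.
    have -> : (fun x => (F x * idf x)%:E) = (fun x : R => (x ^+ d.+1)%:E).
      by apply: funext => z; rewrite Fd exprSr.
    rewrite odd_moment //=; exact: Hsym.
  split; last first.
    by apply: Or33; split => //; exists x, d, c', y, g2; split => //; rewrite -?cc -?ce -?li.
  rewrite /INV -ET Gj; split => //.
  + by case/and4P: gk => _ _ _ gk'; exact: (@gshape_mono j j.+1 (y :: g2) (leqnSn j) gk').
  + by case/andP: ck.
Qed.

Lemma INV_all j : (j <= n.+1)%N -> INV j.
Proof.
suff H : forall m j, (n.+1 - j)%N = m -> (j <= n.+1)%N -> INV j.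
  by move=> jn; exact: (H _ _ erefl jn).
elim=> [|m IH] {}j Em jn.
  have -> : j = n.+1 by apply/eqP; rewrite eqn_leq jn -subn_eq0 Em.
  exact: INV_base.
have jn' : (j <= n)%N by rewrite -ltnS -subn_gt0 Em.
have := IH j.+1; rewrite subnS Em => /(_ erefl jn') H.
by case: (INV_step jn' H).
Qed.

Lemma SC_all j : (j <= n)%N -> SC j.
Proof. by move=> jn; case: (INV_step jn (INV_all (jn : (j.+1 <= n.+1)%N))). Qed.

Lemma FIN : k = k' /\ exists d c, G 0 = [:: (n, d, c)] /\ ~~ odd d.
Proof.
have [E0 a0] := nz (leq0n _); have [rel gk ck] := INV_all (leq0n n.+1).
move: Hnz; rewrite E0 /ipv big_seq1 /eta big_cons big_seq1 /=.
move: rel gk ck; case: (T 0) => [|[[l F] c] [|w r]];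
  case EG: (G 0) => [|[[x d] c'] [|y g2]] //=.
all: try by move=> [_ _ _ []].
all: try by move=> [_ _ _]; case: w => [[]].
all: try by move=> _ _ _; rewrite /ipt /= !mulr0 addr0 eqxx.
move=> [lx _ Fd _] /eqP xn _ H.
rewrite /ipt /= !big_seq1 /ipf /= in H.
have Z : odd d -> fine (\int[sigma l]_x ((F x * onef x)%:E)) = 0.
  move=> od; have -> : (fun x => (F x * onef x)%:E) = (fun x : R => (x ^+ d)%:E).
    by apply: funext => z; rewrite Fd /onef mulr1.
  by rewrite odd_moment //; exact: Hsym.
have lk : l = k'.
  apply/eqP; apply: contraNT H => /negbTE lk; by rewrite lk /= !mulr0 addr0.
split; first by rewrite -lk lx xn /iot eqxx.
exists d, c'; rewrite xn; split => //.
by apply: contraNN H => od; rewrite Z // !if_same !mulr0 addr0 eqxx.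
Qed.


Lemma gshape_mem j g e : gshape j g -> e \in g ->
  e.1.1 = n \/ ((j <= e.1.1 < n)%N /\ iscr (ps e.1.1).1).
Proof.
elim: g => [|f r IH] //=; case: r IH => [|f' r] IH.
  by move=> /eqP fn; rewrite inE => /eqP ->; left.
case/and4P => fb fc _ gr; rewrite inE => /orP[/eqP ->|ein]; first by right.
exact: IH.
Qed.

Lemma gshape_n j g : gshape j g -> n \in ids g.
Proof.
elim: g => [|f r IH] //=; case: r IH => [|f' r] IH /=.
  by move=> /eqP ->; rewrite inE eqxx.
by case/and4P => _ _ _ /IH H; rewrite in_cons H orbT.
Qed.

Lemma gshape_lt j x g : gshape j (x :: g) -> forall y, y \in ids g -> (x.1.1 < y)%N.
Proof.
case: g => [|f r] // H y yin; move: H => /= /and4P[_ _ al _].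
case/mapP: yin => e ein ->.
by move: al => /(@allP _ (fun f : gh => (x.1.1 < f.1.1)%N) (f :: r)); apply.
Qed.

Lemma Gids r y : (r <= n.+1)%N -> y \in ids (G r) ->
  y = n \/ ((r <= y < n)%N /\ iscr (ps y).1).
Proof.
move=> rn /mapP[e ein ->]; have [_ gk _] := INV_all rn; exact: gshape_mem gk ein.
Qed.

Lemma Gn r : (r <= n.+1)%N -> n \in ids (G r).
Proof. by move=> rn; have [_ gk _] := INV_all rn; exact: gshape_n gk. Qed.

Lemma Gtop r x g y : (r <= n.+1)%N -> G r = x :: g -> y \in ids (G r) -> y != x.1.1 ->
  (x.1.1 < y)%N.
Proof.
move=> rn Eg; have [_ gk _] := INV_all rn; rewrite Eg in gk *.
rewrite /= in_cons => /orP[/eqP -> |]; first by rewrite eqxx.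
by move=> yg _; exact: gshape_lt gk _ yg.
Qed.

Lemma G_add j y : (j <= n)%N -> y \notin ids (G j.+1) -> y \in ids (G j) -> y = j.
Proof.
move=> jn; case: (SC_all jn) => [[_ [x [d [c [g2 [E1 E0 _ _]]]]]]|[_ E0 _]|
   [_ [x [d [c [z [g2 [E1 E0 _ _ _]]]]]]]]; rewrite ?E0 ?E1 /=.
- by rewrite !in_cons => /negbTE ->.
- by rewrite in_cons => /negbTE ->; rewrite orbF => /eqP.
- by rewrite !in_cons => /norP[_ /negbTE ->].
Qed.

Lemma absent p q y : (p <= q)%N -> (q <= n.+1)%N -> y \notin ids (G q) ->
  (forall m, (p <= m < q)%N -> m <> y) -> y \notin ids (G p).
Proof.
move=> pq; elim: q pq => [|q IH] pq qn yq Hm.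
  by rewrite leqn0 in pq; rewrite (eqP pq).
case: (ltngtP p q.+1) pq => // [pq|->] _; last by [].
have qn' : (q <= n)%N by [].
have yq' : y \notin ids (G q).
  apply/negP => yq'; have yE := G_add qn' yq yq'.
  by move: (Hm q); rewrite -ltnS pq ltnSn yE => /(_ isT).
apply: IH => //; first exact: ltnW.
by move=> m /andP[pm mq]; apply: Hm; rewrite pm ltnW.
Qed.

Lemma pres p r q y : (p <= r)%N -> (r <= q)%N -> (q <= n.+1)%N ->
  y \in ids (G p) -> y \in ids (G q) -> y \in ids (G r).
Proof.
move=> pr rq qn yp yq.
case: (Gids qn yq) => [->|[/andP[qy yn] _]]; first exact: Gn (leq_trans rq qn).
apply/negPn/negP => yr; have := absent pr (leq_trans rq qn) yr.
move=> /(_ _)/negP; apply => // m /andP[_ mr] my.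
by move: (leq_trans (leq_trans mr rq) qy); rewrite my ltnn.
Qed.


Definition rs j := if iscr (ps j).1 then j else j.+1.
Definition blk j := (head (0%N, 0%N, false) (G (rs j))).1.1.

Lemma rs_ge j : (j <= rs j)%N.
Proof. by rewrite /rs; case: ifP. Qed.
Lemma rs_le j : (rs j <= j.+1)%N.
Proof. by rewrite /rs; case: ifP. Qed.

Lemma SCb j : (j <= n)%N ->
 [\/ [/\ ~~ iscr (ps j).1, ps j = (pw KM (ep j), io j) & exists d c g2,
        [/\ G j.+1 = (blk j, d, c) :: g2, G j = (blk j, d.+1, ~~ c) :: g2, c = ep j
           & io j = iot (blk j)]],
     [/\ iscr (ps j).1, ps j = (if ep j then KDs else KAs, io j), blk j = j,
        G j = (j, 1%N, ~~ ep j) :: G j.+1 & (j < n)%N]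
   | [/\ ~~ iscr (ps j).1, ps j = (if ep j then KA else KD, io j) & exists d c z g2,
        [/\ G j.+1 = (blk j, d, c) :: z :: g2, G j = z :: g2, c = ep j,
           io j = iot (blk j) & odd d]]].
Proof.
move=> jn; rewrite /blk /rs.
case: (SC_all jn) => [[Hp [x [d [c [g2 [E1 E0 ce ix]]]]]]|[Hp E0 jn']|
   [Hp [x [d [c [z [g2 [E1 E0 ce ix od]]]]]]]]; rewrite Hp /=.
- have -> : iscr (pw KM (ep j)) = false by case: (ep j).
  by apply: Or31; split => //; exists d, c, g2; rewrite E1.
- have -> : iscr (if ep j then KDs else KAs) = true by case: (ep j).
  by apply: Or32; split => //; rewrite E0.
- have -> : iscr (if ep j then KA else KD) = false by case: (ep j).
  by apply: Or33; split => //; exists d, c, z, g2; rewrite E1.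
Qed.

Lemma top_notin r e g : (r <= n.+1)%N -> G r = e :: g -> e.1.1 \notin ids g.
Proof.
move=> rn Eg; have [_ gk _] := INV_all rn; rewrite Eg in gk.
apply/negP => /(gshape_lt gk); by rewrite ltnn.
Qed.

Lemma blk_in j : (j <= n)%N -> blk j \in ids (G (rs j)).
Proof.
move=> jn; have rn : (rs j <= n.+1)%N := leq_trans (rs_le j) (jn : (j < n.+1)%N).
have := Gn rn; rewrite /blk; case: (G (rs j)) => [|e g] //= _.
by rewrite in_cons eqxx.
Qed.

Lemma blk_top j y : (j <= n)%N -> y \in ids (G (rs j)) -> y != blk j -> (blk j < y)%N.
Proof.
move=> jn; have rn : (rs j <= n.+1)%N := leq_trans (rs_le j) (jn : (j < n.+1)%N).
rewrite /blk; case E: (G (rs j)) => [|e g] // yin ye.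
by apply: (Gtop rn E) => //; rewrite E.
Qed.

Lemma blk_range j : (j <= n)%N -> blk j = n \/ ((j <= blk j < n)%N /\ iscr (ps (blk j)).1).
Proof.
move=> jn; have rn : (rs j <= n.+1)%N := leq_trans (rs_le j) (jn : (j < n.+1)%N).
case: (Gids rn (blk_in jn)) => [->|[/andP[h1 h2] h3]]; [by left|right].
by rewrite h2 h3 (leq_trans (rs_ge j) h1).
Qed.

Lemma blk_lt j : (j <= n)%N -> ~~ iscr (ps j).1 -> blk j != n -> (j < blk j)%N.
Proof.
move=> jn nc bn; have := blk_in jn; rewrite /rs (negbTE nc) => bin.
have rn : (j.+1 <= n.+1)%N by [].
case: (Gids rn bin) => [/eqP|[/andP[h _] _]]; [by rewrite (negbTE bn)|exact: h].
Qed.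

Lemma cr_self x : (x <= n)%N -> iscr (ps x).1 -> blk x = x.
Proof.
move=> xn cx; case: (SCb xn) => [[nc _ _]|[_ _ -> _ _]|[nc _ _]] //;
  by rewrite cx in nc.
Qed.

Lemma find_rem p q y : (p <= q)%N -> (q <= n.+1)%N -> y \in ids (G q) -> y \notin ids (G p) ->
  exists m, [/\ (p <= m < q)%N, y \in ids (G m.+1) & y \notin ids (G m)].
Proof.
move=> pq; elim: q pq => [|q IH] pq qn yq yp.
  by rewrite leqn0 in pq; rewrite (eqP pq) yq in yp.
case: (ltngtP p q.+1) pq => // [pq|pE] _; last by rewrite pE yq in yp.
case yq': (y \in ids (G q)).
  have [m [/andP[pm mq] h1 h2]] := IH pq (ltnW qn) yq' yp.
  by exists m; rewrite pm (ltn_trans mq (ltnSn q)).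
by exists q; split => //; [rewrite -ltnS pq ltnSn | rewrite yq'].
Qed.

Lemma rem_blk m y : (m <= n)%N -> y \in ids (G m.+1) -> y \notin ids (G m) ->
  blk m = y /\ ps m = (if ep m then KA else KD, io m).
Proof.
move=> mn y1 y0; case: (SCb mn) => [[_ _ [d [c [g2 [E1 E0 _ _]]]]]|[_ _ _ E0 _]|
   [_ Hp [d [c [z [g2 [E1 E0 _ _ _]]]]]]].
- by move: y0 y1; rewrite E0 E1 /= !in_cons => /negbTE ->.
- by move: y0 y1; rewrite E0 /= in_cons => /norP[_ /negbTE ->].
- move: y1; rewrite E1 /= in_cons => /orP[/eqP -> //|yin].
  by move: y0; rewrite E0 /= yin.
Qed.

Lemma rem_lower m x : (m <= n)%N -> x \in ids (G m.+1) -> x \notin ids (G m) ->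
  forall i, (i <= n)%N -> blk i = x -> (m <= i)%N.
Proof.
move=> mn x1 x0 i iN bi; rewrite leqNgt; apply/negP => im.
have xi : x \in ids (G (rs i)) by rewrite -bi; exact: blk_in.
have := pres (leq_trans (rs_le i) im) (leqnSn m) mn xi x1.
by rewrite (negbTE x0).
Qed.


Lemma Io j : (j <= n)%N -> io j = iot (blk j).
Proof.
move=> jn; case: (SCb jn) => [[_ _ [d [c [g2 [_ _ _ ->]]]]]|[_ _ -> _ jn']|
   [_ _ [d [c [z [g2 [_ _ _ -> _]]]]]]] //.
by rewrite /iot; case: eqP => // jE; rewrite jE ltnn in jn'.
Qed.

Lemma bottom : [/\ blk 0 = n, blk n = n, ps 0%N = (pw KM (ep 0%N), io 0%N),
   ps n = (pw KM (ep n), io n) & ep 0%N = ~~ ep n].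
Proof.
have [_ [d0 [c0' [E0 od0]]]] := FIN.
case: (SCb (leqnn n)) => [[_ Hpn [d [c [g2 [E1 _ ce _]]]]]|[_ _ _ _]|
   [_ _ [d [c [z [g2 [E1 _ _ _ _]]]]]]]; last by rewrite G_end in E1.
  2: by rewrite ltnn.
rewrite G_end in E1; case: E1 => bn _ cE _.
case: (SCb (leq0n n)) => [[_ Hp0 [d' [c' [g2' [E1' E0' ce' _]]]]]|[_ _ _ E0' _]|[_ Hp0 _]].
- rewrite E0 in E0'; case: E0' => b0 dE _ _.
  have [_ _ ck] := INV_all (isT : (1 <= n.+1)%N).
  rewrite E1' /colok /= -b0 /bs eqxx in ck.
  move: ck => /andP[/eqP cc _].
  have od : odd d' by move: od0; rewrite dE /= negbK.
  split => //; rewrite -ce' cc od -ce -cE /=; by case: c0.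
- have := Gn (isT : (1 <= n.+1)%N); rewrite E0 in E0'; case: E0' => _ _ _ <-.
  by [].
- by case: H0.
Qed.

Lemma ann_least j : (j <= n)%N -> ps j = (if ep j then KA else KD, io j) ->
  forall i, (i <= n)%N -> blk i = blk j -> (j <= i)%N.
Proof.
move=> jn Hpj; case: (SCb jn) => [[_ Hp _]|[_ Hp _ _ _]|[_ _ [d [c [z [g2 [E1 E0 _ _ _]]]]]]].
- by move: Hp; rewrite Hpj; case: (ep j).
- by move: Hp; rewrite Hpj; case: (ep j).
apply: rem_lower => //; first by rewrite E1 /= in_cons eqxx.
rewrite E0; exact: (top_notin (jn : (j < n.+1)%N) E1).
Qed.

Lemma cr_block x : (x < n)%N -> iscr (ps x).1 -> exists a,
  [/\ (a < x)%N, blk a = x, ps a = (if ep a then KA else KD, io a), ep a = ~~ ep x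
    & forall i, (i <= n)%N -> blk i = x -> (a <= i <= x)%N].
Proof.
move=> xlt cx; have xn := ltnW xlt.
case: (SCb xn) => [[nc _ _]|[_ _ _ Ex _]|[nc _ _]]; try by rewrite cx in nc.
have xin : x \in ids (G x) by rewrite Ex /= in_cons eqxx.
have [_ [d0 [c0' [E0 _]]]] := FIN.
have xout : x \notin ids (G 0) by rewrite E0 /= in_cons orbF; apply/eqP => xE; rewrite xE ltnn in xlt.
have [a [/andP[_ ax] a1 a0]] := find_rem (leq0n x) (leq_trans xn (leqnSn n)) xin xout.
have an : (a <= n)%N := ltnW (ltn_trans ax xlt).
have [ba Hpa] := rem_blk an a1 a0.
exists a; split => //.
- case: (SCb an) => [[_ Hp _]|[_ Hp _ _ _]|[_ _ [d [c [z [g2 [E1 _ ce _ od]]]]]]].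
  + by move: Hp; rewrite Hpa; case: (ep a).
  + by move: Hp; rewrite Hpa; case: (ep a).
  have [_ _ ck] := INV_all (an : (a < n.+1)%N).
  rewrite E1 /colok /= ba /bs in ck; move: ck => /andP[/eqP cc _].
  have xnn : (x == n) = false by apply/negbTE; rewrite neq_ltn xlt.
  by rewrite -ce cc xnn od addbF.
- move=> i iN bi; rewrite (rem_lower an a1 a0 iN bi) /=.
  case ci: (iscr (ps i).1).
    by rewrite -bi (cr_self iN ci).
  apply: ltnW; rewrite -bi; apply: blk_lt => //; first by rewrite ci.
  by rewrite bi neq_ltn xlt.
Qed.

Lemma stay m x : (m <= n)%N -> blk m <> x -> look x (G m) = look x (G m.+1).
Proof.
move=> mn bx; case: (SCb mn) => [[_ _ [d [c [g2 [E1 E0 _ _]]]]]|[_ _ bm E0 _]|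
   [_ _ [d [c [z [g2 [E1 E0 _ _ _]]]]]]].
- by rewrite E0 E1 /=; case: eqP.
- by rewrite E0 /=; case: eqP => // mE; case: bx; rewrite bm.
- rewrite E0 E1; rewrite [in RHS]/look -/look; case: eqP => // mE; by case: bx.
Qed.

Lemma Alt i j : (i < j)%N -> (j <= n)%N -> blk i = blk j ->
  (forall l, (i < l < j)%N -> blk l <> blk j) -> ep i = ~~ ep j.
Proof.
move=> ij jn bij Hl; set x := blk j.
have iN : (i <= n)%N := ltnW (leq_trans ij jn).
have L : look x (G j) = Some (~~ ep j).
  case: (SCb jn) => [[_ _ [d [c [g2 [E1 E0 ce _]]]]]|[_ _ bj E0 _]|[_ Hp _]].
  - by rewrite E0 /= eqxx ce.
  - by rewrite E0 /x bj /= eqxx.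
  - have := ann_least jn Hp iN bij; by rewrite leqNgt ij.
have It : forall t, (t <= j - i.+1)%N -> look x (G (j - t)) = Some (~~ ep j).
  elim=> [|t IH] ht; first by rewrite subn0.
  have e : (j - t = (j - t.+1).+1)%N by lia.
  rewrite -IH ?e; last by lia.
  apply: stay; first by lia.
  apply: Hl; lia.
have Li := It _ (leqnn (j - i.+1)).
have e : (j - (j - i.+1) = i.+1)%N by lia.
rewrite e in Li.
case: (SCb iN) => [[_ _ [d [c [g2 [E1 E0 ce _]]]]]|[_ _ bi _ _]|
   [_ _ [d [c [z [g2 [E1 E0 ce _ _]]]]]]].
- by move: Li; rewrite E1 /= bij eqxx ce => -[].
- exfalso; case: (blk_range jn) => [bn|[/andP[jb _] _]].
    by move: bij; rewrite bi bn => iE; move: ij jn; rewrite iE => h1 h2; lia.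
  by move: bij jb; rewrite bi -/x => <-; rewrite leqNgt ij.
- by move: Li; rewrite E1 /= bij eqxx ce => -[].
Qed.

Lemma NC a b c d : (a < b)%N -> (b < c)%N -> (c < d)%N -> (d <= n)%N ->
  blk a = blk c -> blk b = blk d -> blk a <> blk b -> False.
Proof.
move=> ab bc cd dn hac hbd hab.
have an : (a <= n)%N by lia.
have bn : (b <= n)%N by lia.
have cn : (c <= n)%N by lia.
have := rs_le a; have := rs_le b; have := rs_le c; have := rs_le d.
have := rs_ge a; have := rs_ge b; have := rs_ge c; have := rs_ge d.
move=> ga gb gc gd la lb lc ld.
have yd : blk b \in ids (G (rs d)) by rewrite hbd; exact: blk_in.
have xc : blk a \in ids (G (rs c)) by rewrite hac; exact: blk_in.
have yc : blk b \in ids (G (rs c)).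
  by apply: (pres _ _ _ (blk_in bn) yd); lia.
have xb : blk a \in ids (G (rs b)).
  by apply: (pres _ _ _ (blk_in an) xc); lia.
have h1 := blk_top cn yc; rewrite -hac in h1.
have h2 := blk_top bn xb.
have : (blk a < blk b)%N by apply: h1; apply/eqP => e; apply: hab.
have : (blk b < blk a)%N by apply: h2; apply/eqP => e; apply: hab.
lia.
Qed.


Lemma blkA_lt j : (j <= n)%N -> ps j = (if ep j then KA else KD, io j) ->
  [/\ (j < blk j < n)%N & iscr (ps (blk j)).1].
Proof.
move=> jn Hpj; case: (SCb jn) => [[_ Hp _]|[_ Hp _ _ _]|[nc _ [d [c [z [g2 [E1 E0 _ _ _]]]]]]].
- by move: Hp; rewrite Hpj; case: (ep j).
- by move: Hp; rewrite Hpj; case: (ep j).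
have bn : blk j != n.
  apply/eqP => bE; have := Gn (leqW jn); rewrite E0.
  have := top_notin (jn : (j < n.+1)%N) E1; rewrite /= bE => /negbTE ->.
  by [].
rewrite (blk_lt jn nc bn) /=.
by case: (blk_range jn) => [/eqP|[/andP[_ ->] ->]]; [rewrite (negbTE bn)|].
Qed.

Lemma final (eps : 'I_n.+1 -> bool) (iota : 'I_n.+1 -> 'I_N) (psi : 'I_n.+1 -> opkind * 'I_N)
  (Hps : forall i : 'I_n.+1, psi i = ps i) (Hep : forall i : 'I_n.+1, eps i = ep i)
  (Hio : forall i : 'I_n.+1, iota i = io i) :
  [/\ k = k', (forall j : 'I_n.+1, nat_of_ord j = 0%N -> iota j = k),
      (forall j : 'I_n.+1, nat_of_ord j = n -> iota j = k)
    & exists P : {set {set 'I_n.+1}},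
        [/\ is_NC P, is_NC_irr P,
            (forall B, B \in P -> block_ok iota eps B)
          & psi =1 phi_pi P iota eps]].
Proof.
have [kk _] := FIN.
have [b0 bn p0 pn e0n] := bottom.
have iotn : iot n = k by rewrite /iot eqxx.
have leo : forall i : 'I_n.+1, (i <= n)%N by move=> i; rewrite -ltnS ltn_ord.
split => //.
- by move=> j j0; rewrite Hio j0 (Io (leq0n n)) b0.
- by move=> j jE; rewrite Hio jE (Io (leqnn n)) bn.
pose bl := fun i : 'I_n.+1 => blk i.
pose P := preim_partition bl [set: 'I_n.+1].
have partP : finset.partition P [set: 'I_n.+1] := preim_partitionP bl _.
have pbl : forall i j : 'I_n.+1, (j \in finset.pblock P i) = (bl i == bl j).
  move=> i j; apply: pblock_equivalence_partition => //.
  by move=> x y z _ _ _; split => // /eqP ->.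
have memB : forall B, B \in P -> exists x : 'I_n.+1, forall i, (i \in B) = (bl x == bl i).
  by move=> B /imsetP[x _ ->]; exists x => i; rewrite !inE.
have covP : forall i : 'I_n.+1, i \in finset.cover P.
  by move=> i; case/and3P: partP => /eqP -> _ _; rewrite inE.
have ncP : noncrossing P.
  move=> B B' HB HB' neq a b c d ab bc cd aB cB bB dB.
  have [x Bx] := memB B HB; have [x' Bx'] := memB B' HB'.
  move: aB cB bB dB; rewrite !Bx !Bx' => /eqP ha /eqP hc /eqP hb /eqP hd.
  apply: (NC ab bc cd (ltn_ord d : (d < n.+1)%N)).
  - by rewrite /bl in ha hc; rewrite -ha -hc.
  - by rewrite /bl in hb hd; rewrite -hb -hd.
  - move=> e; apply: (negP neq); apply/eqP/setP => i; rewrite Bx Bx'.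
    by rewrite /bl in ha hb *; rewrite ha hb e.
exists P; split.
- by split.
- split; first by split.
  move=> i j i0 jn'; exists (finset.pblock P i); first exact: pblock_mem.
  rewrite mem_pblock covP pbl /bl /= i0 jn' b0 bn eqxx.
  by [].
- move=> B HB; have [x Bx] := memB B HB; set z := blk x.
  have inB : forall i : 'I_n.+1, (i \in B) = (blk i == z).
    by move=> i; rewrite Bx /bl eq_sym.
  split.
  + move=> i j; rewrite !inB => /eqP bi /eqP bj.
    by rewrite !Hio (Io (leo i)) (Io (leo j)) bi bj.
  + move=> i j; rewrite !inB => /eqP bi /eqP bj ij Hl.
    rewrite !Hep (Alt ij (leo j)); first by case: (ep j).
      by rewrite bi bj.
    move=> l /andP[il lj] e.
    have lo : (l < n.+1)%N := ltn_trans lj (ltn_ord j).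
    apply: (Hl (Ordinal lo)); last by split.
    by rewrite inB /= e bj.
  + move=> i j; rewrite !inB => /eqP bi /eqP bj Hmin Hmax.
    case: (eqVneq z n) => zn.
    * have i0 : nat_of_ord i = 0%N.
        apply/eqP; rewrite -leqn0; apply: (Hmin ord0).
        by rewrite inB /= b0 zn.
      have jn : nat_of_ord j = n.
        apply/eqP; rewrite eqn_leq leo /=; apply: (Hmax ord_max).
        by rewrite inB /= bn zn.
      by rewrite !Hep i0 jn e0n; case: (ep n).
    * have [zlt zcr] : (z < n)%N /\ iscr (ps z).1.
        case: (blk_range (leo x)) => [/eqP|[/andP[_ h1] h2]]; last by [].
        by rewrite -/z (negbTE zn).
      have [a [az ba Hpa ea bnd]] := cr_block zlt zcr.
      have alt : (a < n.+1)%N by lia.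
      have zlt' : (z < n.+1)%N by lia.
      have ia : nat_of_ord i = a.
        apply/eqP; rewrite eqn_leq.
        have -> : (i <= a)%N by apply: (Hmin (Ordinal alt)); rewrite inB /= ba.
        by case/andP: (bnd i (leo i) bi).
      have jz : nat_of_ord j = z.
        apply/eqP; rewrite eqn_leq.
        have -> : (z <= j)%N.
          by apply: (Hmax (Ordinal zlt')); rewrite inB /= cr_self // ltnW.
        by case/andP: (bnd j (leo j) bj) => _ ->.
      by rewrite !Hep ia jz ea; case: (ep z).
- have leastF : forall (j : 'I_n.+1) lo, (lo <= n)%N -> blk lo = blk j -> (lo < j)%N ->
      [forall i in finset.pblock P j, (j <= i)%N] = false.
    move=> j lo lon blo lj; apply/negbTE/negP => /forall_inP H.
    have := H (inord lo); rewrite pbl /bl inordK ?ltnS // blo eqxx => /(_ isT).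
    by rewrite leqNgt lj.
  have leastT : forall j : 'I_n.+1, (forall i, (i <= n)%N -> blk i = blk j -> (j <= i)%N) ->
      [forall i in finset.pblock P j, (j <= i)%N] = true.
    move=> j H; apply/forall_inP => i; rewrite pbl /bl => /eqP e.
    by apply: H (leo i) _; rewrite e.
  have greatF : forall (j : 'I_n.+1) hi, (hi <= n)%N -> blk hi = blk j -> (j < hi)%N ->
      [forall i in finset.pblock P j, (i <= j)%N] = false.
    move=> j hi hin bhi jh; apply/negbTE/negP => /forall_inP H.
    have := H (inord hi); rewrite pbl /bl inordK ?ltnS // bhi eqxx => /(_ isT).
    by rewrite leqNgt jh.
  have greatT : forall j : 'I_n.+1, (forall i, (i <= n)%N -> blk i = blk j -> (i <= j)%N) ->
      [forall i in finset.pblock P j, (i <= j)%N] = true.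
    move=> j H; apply/forall_inP => i; rewrite pbl /bl => /eqP e.
    by apply: H (leo i) _; rewrite e.
  move=> j; rewrite Hps /phi_pi /= Hep Hio.
  case: (eqVneq (nat_of_ord j) 0%N) => [j0|j0].
    by rewrite j0 p0.
  case: (eqVneq (nat_of_ord j) n) => [jn|jn].
    by rewrite jn pn orbT.
  rewrite /=.
  have jpos : (0 < j)%N by rewrite lt0n.
  have jlt : (j < n)%N by rewrite ltn_neqAle jn leo.
  case: (SCb (leo j)) => [[nc Hp _]|[cr Hp bj Ej _]|[nc Hp _]].
  + have [lo [lol lon blo]] : exists lo, [/\ (lo < j)%N, (lo <= n)%N & blk lo = blk j].
      case: (eqVneq (blk j) n) => bjn; first by exists 0%N; split => //; rewrite b0 bjn.
      have [bjlt bcr] : ((j <= blk j < n)%N /\ iscr (ps (blk j)).1).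
        by case: (blk_range (leo j)) => // /eqP; rewrite (negbTE bjn).
      have [a [az ba Hpa _ bnd]] := cr_block (elimT andP bjlt).2 bcr.
      exists a; split => //; last by lia.
      have := bnd j (leo j) erefl; case/andP => aj _.
      rewrite ltn_neqAle aj andbT; apply/eqP => aE.
      by move: Hp; rewrite -aE Hpa; case: (ep a).
    have [hi [jh hin bhi]] : exists hi, [/\ (j < hi)%N, (hi <= n)%N & blk hi = blk j].
      case: (eqVneq (blk j) n) => bjn; first by exists n; split => //; rewrite bn bjn.
      have [bjlt bcr] : ((j <= blk j < n)%N /\ iscr (ps (blk j)).1).
        by case: (blk_range (leo j)) => // /eqP; rewrite (negbTE bjn).
      exists (blk j); split.
      * exact: blk_lt (leo j) nc bjn.
      * by apply: ltnW; case/andP: bjlt.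
      * by apply: cr_self => //; apply: ltnW; case/andP: bjlt.
    rewrite (leastF j lo) // (greatF j hi) //.
    by rewrite Hp; case: (ep j).
  + have [a [az ba Hpa _ bnd]] := cr_block jlt cr.
    have an : (a <= n)%N by lia.
    have baj : blk a = blk j by rewrite ba bj.
    rewrite (leastF j a an baj az).
    rewrite greatT; first by rewrite Hp; case: (ep j).
    by move=> i iN bi; case/andP: (bnd i iN (etrans bi bj)).
  + rewrite leastT; last by move=> i iN bi; exact: (ann_least (leo j) Hp iN bi).
    by rewrite Hp; case: (ep j).
Qed.

End Run.


Unset Implicit Arguments.
Set Strict Implicit.

Theorem lemma4p3 (R : realType) (N : nat)
  (sigma : 'I_N -> {finite_measure set R -> \bar R})
  (Hsym : forall (k : 'I_N) (A : set R), measurable A ->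
            sigma k ((fun x : R => - x) @` A) = sigma k A)
  (Hcpt : forall k : 'I_N, exists C : R, sigma k [set x : R | C < `|x|] = 0%E)
  (Rn : nat) (HR : (0 < Rn)%N)
  (eps : 'I_Rn -> bool) (iota : 'I_Rn -> 'I_N) (psi : 'I_Rn -> opkind * 'I_N)
  (Ha : forall j : 'I_Rn, nat_of_ord j = 0%N ->
          if eps j then psi j = (KMs, iota j) \/ psi j = (KDs, iota j)
          else psi j = (KM, iota j) \/ psi j = (KAs, iota j))
  (Hb : forall j : 'I_Rn, nat_of_ord j = Rn.-1 ->
          if eps j then psi j = (KMs, iota j) \/ psi j = (KA, iota j)
          else psi j = (KM, iota j) \/ psi j = (KD, iota j))
  (Hc : forall j : 'I_Rn, (0 < j)%N -> (j < Rn.-1)%N ->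
          [\/ psi j = (pw KM (eps j), iota j),
              psi j = (pw KAs (eps j), iota j)
            | psi j = (pw KD (eps j), iota j)])
  (k k' : 'I_N) :
  ipv sigma (apply_ops sigma [seq psi j | j <- enum 'I_Rn] (eta R k)) (eta R k') <> 0 ->
  [/\ k = k',
      (forall j : 'I_Rn, nat_of_ord j = 0%N -> iota j = k),
      (forall j : 'I_Rn, nat_of_ord j = Rn.-1 -> iota j = k)
    & exists P : {set {set 'I_Rn}},
        [/\ is_NC P, is_NC_irr P,
            (forall B, B \in P -> block_ok iota eps B)
          & psi =1 phi_pi P iota eps]].
Proof.
move: HR eps iota psi Ha Hb Hc; case: Rn => [|n]; first by case.
move=> _ eps iota psi Ha Hb Hc Hnz0 /=.
pose ps := fun j : nat => psi (inord j).
pose ep := fun j : nat => eps (inord j).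
pose io := fun j : nat => iota (inord j).
have Hps : forall i : 'I_n.+1, psi i = ps i by move=> i; rewrite /ps inord_val.
have Hep : forall i : 'I_n.+1, eps i = ep i by move=> i; rewrite /ep inord_val.
have Hio : forall i : 'I_n.+1, iota i = io i by move=> i; rewrite /io inord_val.
have Hk : forall j, (j <= n)%N ->
  [\/ ps j = (pw KM (ep j), io j), ps j = (if ep j then KDs else KAs, io j)
    | ps j = (if ep j then KA else KD, io j)].
  move=> j jn; have iv : nat_of_ord (inord j : 'I_n.+1) = j := inordK (jn : (j < n.+1)%N).
  rewrite /ps /ep /io.
  case: (posnP j) => [j0|jpos].
    have := Ha (inord j); rewrite iv => /(_ j0).
    by case: (eps (inord j)) => -[->|->]; [apply: Or31|apply: Or32|apply: Or31|apply: Or32].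
  case: (ltngtP j n) jn => // [jlt|jE] _.
    have := Hc (inord j); rewrite iv => /(_ jpos jlt).
    by case: (eps (inord j)) => -[->|->|->];
      [apply: Or31|apply: Or33|apply: Or32|apply: Or31|apply: Or32|apply: Or33].
  have := Hb (inord j); rewrite iv => /(_ jE).
  by case: (eps (inord j)) => -[->|->]; [apply: Or31|apply: Or33|apply: Or31|apply: Or33].
have Hn : ~~ iscr (ps n).1.
  have := Hb (inord n); rewrite inordK // => /(_ erefl); rewrite /ps.
  by case: (eps (inord n)) => -[->|->].
have H0 : ps 0%N <> (if ep 0%N then KA else KD, io 0%N).
  have := Ha (inord 0); rewrite inordK // => /(_ erefl); rewrite /ps /ep.
  by case: (eps (inord 0)) => -[->|->].
have Els : [seq psi j | j <- enum 'I_n.+1] = [seq ps i | i <- seq.iota 0 n.+1].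
  by rewrite -val_enum_ord -map_comp; apply: eq_map => i; rewrite /= Hps.
have Eops : forall v, apply_ops sigma [seq ps i | i <- seq.iota 0 n.+1] v =
    foldr (fun i v => app_v sigma (ps i) v) v (seq.iota 0 n.+1).
  by move=> v; rewrite /apply_ops foldr_map.
move: Hnz0; rewrite Els -[eta R k]/([:: _] ++ [:: _]) apply_ops_cat ipv_cat !Eops.
move=> Hnz0.
have [c0 Hnz] : exists c0, ipv sigma (S sigma n ps k c0 0) (eta R k') != 0.
  rewrite /S subn0 /v0.
  case: (eqVneq (ipv sigma (foldr (fun i v => app_v sigma (ps i) v)
      [:: (1, [:: (k, @onef R, false)])] (seq.iota 0 n.+1)) (eta R k')) 0) => h1.
    by exists true; apply/eqP => h2; apply: Hnz0; rewrite h1 h2 addr0.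
  by exists false.
exact: (final Hsym Hk Hn H0 Hnz Hps Hep Hio).
Qed.
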